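(* Let $X=(X_1,\ldots,X_n)$ be i.i.d. real random variables whose common distribution has a density $f$ with respect to Lebesgue measure and a unique median $m$, with constants $r,L>0$ such that $f(u)\ge L$ for all $u\in[m-r,m+r]$. Assume $|m|\le R$ for some $R>0$ and let $T>R+r$. Let $\alpha_3\in[2e^{-nL^2r^2/2},1]$. Then with probability at least $1-\alpha_3$, $$|\hat m_T(X)-m|\le\sqrt{\frac{2\log(2/\alpha_3)}{nL^2}}.$$
   Context: For $x\in\mathbb R^n$, $x_{(1)}\le\cdots\le x_{(n)}$ denote its ordered coordinates, $\ell=\lfloor n/2\rfloor$, and $\hat m(x)=x_{(\ell)}$. For $T>0$, $f_T(u)=u$ if $|u|\le T$ and $f_T(u)=\mathrm{sign}(u)T$ otherwise; $\hat m_T(x)=\hat m(y)$ where $y_i=f_T(x_i)$, $i=1,\ldots,n$. *)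

(* Defs.v *)
From HB Require Import structures.
From mathcomp Require Import all_boot all_order all_algebra.
From mathcomp Require Import all_classical all_reals all_analysis.
Set Implicit Arguments. Unset Strict Implicit. Unset Printing Implicit Defensive.
Import Order.TTheory GRing.Theory Num.Theory.
Import numFieldNormedType.Exports.
Local Open Scope classical_set_scope.
Local Open Scope ring_scope.

Section Defs.
Variable R : realType.

(* x_(k) : the k-th smallest coordinate (1-indexed); for k = 0 the
   convention x_(0) := x_(1) is used (never relevant). *)
Definition order_stat (n k : nat) (x : 'I_n -> R) : R :=
  nth 0 (sort <=%R [seq x i | i : 'I_n]) k.-1.

Definition med_hat (n : nat) (x : 'I_n -> R) : R := order_stat (n./2) x.

Definition clip (T u : R) : R := if `|u| <= T then u else Num.sg u * T.

Definition med_hat_T (T : R) (n : nat) (x : 'I_n -> R) : R :=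
  med_hat (fun i => clip T (x i)).

Definition is_median_density (f : R -> R) (m : R) : Prop :=
  let lo := [set x : R | x <= m] in let hi := [set x : R | m <= x] in
  ((2^-1)%:E <= \int[@lebesgue_measure R]_(x in lo) (f x)%:E)%E /\
  ((2^-1)%:E <= \int[@lebesgue_measure R]_(x in hi) (f x)%:E)%E.

End Defs.

Definition mutually_independent {d} {Omega : measurableType d} {R : realType}
  (P : probability Omega R) (n : nat) (X : 'I_n -> {RV P >-> R}) : Prop :=
  forall B : 'I_n -> set R, (forall i, measurable (B i)) ->
    P [set w | forall i, B i (X i w)] = (\prod_(i < n) P (X i @^-1` B i))%E.

Definition has_density {d} {Omega : measurableType d} {R : realType}
  (P : probability Omega R) (Y : {RV P >-> R}) (f : R -> R) : Prop :=
  forall A : set R, measurable A ->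
    P (Y @^-1` A) = (\int[@lebesgue_measure R]_(x in A) (f x)%:E)%E.

(* Main.v *)
Require Import Defs.
From HB Require Import structures.
From mathcomp Require Import all_boot all_order all_algebra.
From mathcomp Require Import all_classical all_reals all_analysis.
From mathcomp Require Import ring lra zify.
Import Order.TTheory GRing.Theory Num.Theory.
Local Open Scope classical_set_scope.
Local Open Scope ring_scope.

Lemma expR_le_quad (R : realType) (x : R) : 0 <= x -> x <= 2^-1 ->
  expR x <= 1 + x + x ^+ 2.
Proof.
move=> x0 x1.
set y := x / 4.
have y0 : 0 <= y by rewrite /y; lra.
have y1 : y <= 8^-1 by rewrite /y; lra.
have -> : x = 4%:R * y by rewrite /y; field.
rewrite expRM_natl.
have ey0 : 0 < expR y by apply: expR_gt0.
have hy : expR y * (1 - y) <= 1.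
  have h := expR_ge1Dx (- y).
  have e := expRxMexpNx_1 y.
  by rewrite -[X in _ <= X]e ler_pM2l.
have ey : expR y <= (1 - y)^-1.
  by rewrite -[(1 - y)^-1]mul1r ler_pdivlMr; [exact: hy | lra].
apply: (le_trans (lerXn2r 4 _ _ ey)).
- by rewrite nnegrE ltW.
- by rewrite nnegrE invr_ge0; lra.
rewrite exprVn -[_ ^- 4]mul1r ler_pdivrMr; last by apply: exprn_gt0; lra.
have h2 : 0 <= y ^+ 2 * (6%:R - 44%:R * y) by apply: mulr_ge0; [exact: sqr_ge0 | lra].
have h4 : 0 <= y ^+ 4 * (81%:R - 60%:R * y) by apply: mulr_ge0; [apply: exprn_ge0 | lra].
have h6 : 0 <= y ^+ 6 by apply: exprn_ge0.
have -> : (1 + 4 * y + (4 * y) ^+ 2) * (1 - y) ^+ 4 =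
  1 + y ^+ 2 * (6%:R - 44%:R * y) + y ^+ 4 * (81%:R - 60%:R * y) + 16%:R * y ^+ 6 by ring.
lra.
Qed.
Section BigSets.
Context {d : measure_display} {T : measurableType d} {R : realType}.
Variable (P : probability T R).

Lemma bigU_mem (I : eqType) (s : seq I) (Q : pred I) (F : I -> set T) w :
  (\big[setU/set0]_(i <- s | Q i) F i) w <-> exists i, [/\ i \in s, Q i & F i w].
Proof.
elim: s => [|x s IH]; first by rewrite big_nil; split => // -[i []].
rewrite big_cons; case: ifP => Qx.
- split.
  + case => [Fx|/IH [i [si Qi Fi]]]; first by exists x; rewrite inE eqxx.
    by exists i; rewrite inE si orbT.
  + case => i []; rewrite inE => /orP [/eqP ->|si] Qi Fi; first by left.
    by right; apply/IH; exists i.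
- rewrite IH; split; case => i [si Qi Fi]; exists i; split => //.
    by rewrite inE si orbT.
  move: si; rewrite inE => /orP [/eqP Ex|//].
  by subst; rewrite Qi in Qx.
Qed.

Lemma bigI_mem (I : eqType) (s : seq I) (F : I -> set T) w :
  (\big[setI/setT]_(i <- s) F i) w <-> (forall i, i \in s -> F i w).
Proof.
elim: s => [|x s IH]; first by rewrite big_nil.
rewrite big_cons; split.
- case => Fx /IH H i; rewrite inE => /orP [/eqP ->|si] //; exact: H.
- move=> H; split; first by apply: H; rewrite inE eqxx.
  by apply/IH => i si; apply: H; rewrite inE si orbT.
Qed.

Lemma bigU_meas (I : Type) (s : seq I) (Q : pred I) (F : I -> set T) :
  (forall i, measurable (F i)) -> measurable (\big[setU/set0]_(i <- s | Q i) F i).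
Proof.
move=> mF; elim: s => [|x s IH]; first by rewrite big_nil.
by rewrite big_cons; case: ifP => // _; apply: measurableU.
Qed.

Lemma bigI_meas (I : Type) (s : seq I) (F : I -> set T) :
  (forall i, measurable (F i)) -> measurable (\big[setI/setT]_(i <- s) F i).
Proof.
move=> mF; elim: s => [|x s IH]; first by rewrite big_nil.
by rewrite big_cons; apply: measurableI.
Qed.

Lemma bigU_le (I : Type) (s : seq I) (Q : pred I) (F : I -> set T) :
  (forall i, measurable (F i)) ->
  (P (\big[setU/set0]_(i <- s | Q i) F i) <= \sum_(i <- s | Q i) P (F i))%E.
Proof.
move=> mF; elim: s => [|x s IH]; first by rewrite !big_nil measure0.
rewrite !big_cons; case: ifP => // _.
apply: (le_trans (measureU2 _ _ _)) => //; first exact: bigU_meas.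
by apply: leeD.
Qed.
End BigSets.

Lemma tail_bound (R : realType) (n a : nat) (p dd : R) :
  0 <= p -> p <= 2^-1 - dd -> 0 <= dd -> dd <= 2^-1 -> (n <= a.*2.+1)%N ->
  2^-1 <= n%:R * dd ^+ 2 ->
  \sum_(g : {ffun 'I_n -> bool} | (a <= #|[pred i | g i]|)%N)
     \prod_i (if g i then p else 1 - p) <= expR (- (n%:R * dd ^+ 2) / 2).
Proof.
move=> p0 pd d0 d1 na nd.
set y := expR dd.
have y1 : 1 <= y by rewrite /y -expR0 ler_expR.
have y0 : 0 < y by apply: expR_gt0.
pose G := fun (i : 'I_n) (j : bool) => (if j then p else 1 - p) * (if j then y else 1).
have step1 : \sum_(g : {ffun 'I_n -> bool} | (a <= #|[pred i | g i]|)%N)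
     \prod_i (if g i then p else 1 - p) <=
     (\sum_(g : {ffun 'I_n -> bool}) \prod_i G i (g i)) / y ^+ a.
  rewrite mulr_suml big_mkcond /=; apply: ler_sum => g _.
  have F0 : 0 <= \prod_i (if g i then p else 1 - p).
    by apply: prodr_ge0 => i _; case: (g i); lra.
  have -> : \prod_i G i (g i) = \prod_i (if g i then p else 1 - p) * y ^+ #|[pred i | g i]|.
    rewrite /G big_split /=; congr (_ * _).
    rewrite -big_mkcond /= prodr_const.
    done.
  case: ifP => ha.
  - rewrite -mulrA -[X in X <= _]mulr1 ler_wpM2l // ler_pdivlMr ?exprn_gt0 // mul1r.
    exact: ler_weXn2l.
  - apply: mulr_ge0; last by rewrite invr_ge0 exprn_ge0 // ltW.
    by apply: mulr_ge0 => //; rewrite exprn_ge0 // ltW.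
apply: (le_trans step1).
rewrite -(bigA_distr_bigA (fun i j => G i j)) /=.
under eq_bigr do rewrite big_bool /G /=.
rewrite prodr_const card_ord mulr1.
have e1 : p * y + (1 - p) <= expR (p * (y - 1)).
  by have := expR_ge1Dx (p * (y - 1)); lra.
have q0 : 0 <= p * y + (1 - p) by have := mulr_ge0 p0 (ltW y0); lra.
apply: (le_trans (ler_wpM2r _ (lerXn2r n _ _ e1))).
- by rewrite invr_ge0 exprn_ge0 // ltW.
- by rewrite nnegrE.
- by rewrite nnegrE ltW // expR_gt0.
rewrite -expRM_natl /y -expRM_natl -expRN -expRD ler_expR.
have hy : y - 1 <= dd + dd ^+ 2 by have := @expR_le_quad R dd d0 d1; rewrite /y; lra.
have hn : 0 <= n%:R :> R by [].
have h1 : n%:R * (p * (y - 1)) <= n%:R * ((2^-1 - dd) * (dd + dd ^+ 2)).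
  apply: ler_wpM2l => //.
  apply: le_trans (_ : (2^-1 - dd) * (y - 1) <= _).
    by apply: ler_wpM2r => //; lra.
  by apply: ler_wpM2l => //; lra.
have h2 : n%:R <= 2 * a%:R + 1 :> R.
  by move: na; rewrite -(ler_nat R) -addn1 -muln2 natrD natrM; lra.
have h3 : (n%:R - 1) / 2 * dd <= a%:R * dd.
  by apply: ler_wpM2r => //; lra.
have h4 : dd / 2 <= dd * (n%:R * dd ^+ 2).
  have := ler_wpM2l d0 nd; lra.
have e2 : n%:R * ((2^-1 - dd) * (dd + dd ^+ 2)) =
   n%:R / 2 * dd - n%:R * dd ^+ 2 / 2 - dd * (n%:R * dd ^+ 2) by field.
have e3 : (n%:R - 1) / 2 * dd = n%:R / 2 * dd - dd / 2 by field.
rewrite e2 in h1; rewrite e3 in h3; rewrite -/y.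
have e4 : - (n%:R * dd ^+ 2) / 2 = - (n%:R * dd ^+ 2 / 2) by field.
rewrite e4; lra.
Qed.
Lemma prob_tail (d : measure_display) (Omega : measurableType d) (R : realType)
  (P : probability Omega R) (n : nat) (X : 'I_n -> {RV P >-> R})
  (B : set R) (p dd : R) (a : nat) :
  mutually_independent X -> measurable B ->
  (forall i, P (X i @^-1` B) = p%:E) ->
  0 <= p -> p <= 2^-1 - dd -> 0 <= dd -> dd <= 2^-1 -> (n <= a.*2.+1)%N ->
  2^-1 <= n%:R * dd ^+ 2 ->
  measurable [set w | (a <= #|[pred i | `[< B (X i w) >]]|)%N] /\
  (P [set w | (a <= #|[pred i | `[< B (X i w) >]]|)%N]
     <= (expR (- (n%:R * dd ^+ 2) / 2))%:E)%E.
Proof.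
move=> indep mB PB p0 pd d0 d1 na nd.
pose BB := fun (g : {ffun 'I_n -> bool}) (i : 'I_n) => if g i then B else ~` B.
have mBB : forall g i, measurable (BB g i).
  by move=> g i; rewrite /BB; case: (g i) => //; apply: measurableC.
pose atom := fun g : {ffun 'I_n -> bool} => [set w | forall i, BB g i (X i w)].
have atomE : forall g, atom g = \big[setI/setT]_(i <- enum 'I_n) (X i @^-1` BB g i).
  move=> g; apply/seteqP; split => w /=.
  - move=> H; apply/bigI_mem => i _; exact: H.
  - by move/bigI_mem => H i; apply: H; by rewrite mem_enum.
have matom : forall g, measurable (atom g).
  move=> g; rewrite atomE; apply: bigI_meas => i.
  exact: measurable_funPTI.
have Patom : forall g, P (atom g) = (\prod_i (if g i then p else 1 - p))%:E.
  move=> g; rewrite /atom (indep (BB g)) // -prodEFin; apply: eq_bigr => i _.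
  rewrite /BB; case: (g i) => //.
  by rewrite -preimage_setC probability_setC ?PB //; exact: measurable_funPTI.
set A := [set w | _].
have Aeq : A = \big[setU/set0]_(g <- index_enum {ffun 'I_n -> bool} |
                 (a <= #|[pred i | g i]|)%N) atom g.
  apply/seteqP; split => w /=.
  - move=> Aw; apply/bigU_mem.
    exists [ffun i => `[< B (X i w) >]]; split.
    + by rewrite mem_index_enum.
    + suff -> : #|[pred i | [ffun i0 => `[< B (X i0 w) >]] i]| =
                 #|[pred i | `[< B (X i w) >]]| by [].
      by apply: eq_card => i; rewrite !inE ffunE.
    + move=> i; rewrite /BB ffunE; case: asboolP => //.
  - move/bigU_mem => [g [_ hg ag]].
    rewrite /A /=.
    suff <- : #|[pred i | g i]| = #|[pred i | `[< B (X i w) >]]| by [].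
    apply: eq_card => i; rewrite !inE.
    move: (ag i); rewrite /BB; case: (g i) => H.
    + by apply/esym/asboolP.
    + by apply/esym/asboolP.
split; first by rewrite Aeq; apply: bigU_meas.
rewrite Aeq.
have := bigU_le P _ (index_enum {ffun 'I_n -> bool}) (fun g => (a <= #|[pred i | g i]|)%N) _ matom.
move=> H; apply: (le_trans H).
under eq_bigr do rewrite Patom.
rewrite sumEFin lee_fin.
exact: (@tail_bound R n a p dd p0 pd d0 d1 na nd).
Qed.
Lemma int_lb (R : realType) (f : R -> R) (D : set R) (L : R) :
  measurable D -> measurable_fun setT f -> 0 <= L ->
  (forall u, D u -> L <= f u) ->
  (L%:E * (@lebesgue_measure R) D <= \int[@lebesgue_measure R]_(x in D) (f x)%:E)%E.
Proof.
move=> mD mf L0 Lf.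
rewrite -(integral_cst (@lebesgue_measure R) mD L%:E).
eapply ge0_le_integral.
- exact: mD.
- by move=> x _ /=; rewrite lee_fin.
- exact: measurable_cst.
- by apply/measurable_realfun.measurable_EFinP; apply: measurable_funTS.
- by move=> x Dx /=; rewrite lee_fin; apply: Lf.
Qed.

Lemma dens_upper d (Omega : measurableType d) (R : realType)
  (P : probability Omega R) (Y : {RV P >-> R}) (f : R -> R) (m L t : R) :
  has_density Y f -> measurable_fun setT f -> is_median_density f m ->
  0 <= L -> 0 <= t -> (forall u : R, m < u <= m + t -> L <= f u) ->
  (P (Y @^-1` [set x | m + t < x]%R) + (2^-1 + L * t)%:E <= 1)%E.
Proof.
move=> hd mf [med1 med2] L0 t0 Lf.
set A := [set x : R | x <= m].
have mA : measurable A.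
  have -> : A = `]-oo, m]%classic by apply/seteqP; split => x; rewrite /A /= in_itv.
  exact: measurable_itv.
have mB : measurable (`]m, m + t]%classic : set R) by exact: measurable_itv.
have mC : measurable [set x : R | m + t < x].
  have -> : [set x : R | m + t < x] = `]m + t, +oo[%classic by apply/seteqP; split => x; rewrite /= in_itv /= andbT.
  exact: measurable_itv.
have eT : [set: R] = (A `|` `]m, m + t]) `|` [set x | m + t < x].
  apply/seteqP; split => x // _; rewrite /A /= !in_itv /=.
  case: (leP x m) => xm; first by left; left.
  case: (leP x (m + t)) => xt; first by left; right.
  by right.
have mY : forall S, measurable S -> measurable (Y @^-1` S).
  by move=> S mS; exact: measurable_funPTI.
have := probability_setT P.
rewrite -(preimage_setT Y) eT !preimage_setU.
rewrite measureU; [| by apply: measurableU; apply: mY| by apply: mY|].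
rewrite measureU; [| by apply: mY| by apply: mY|].
- move=> H; rewrite -H.
  have hA : ((2^-1)%:E <= P (Y @^-1` A))%E by rewrite hd.
  have hB : ((L * t)%:E <= P (Y @^-1` `]m, (m + t)%R]))%E.
    rewrite hd //.
    apply: le_trans (@int_lb R f _ L mB mf L0 _).
      rewrite lebesgue_measure_itv /= lte_fin.
      case: ltP => h; first by rewrite -EFinD -EFinM lee_fin; lra.
      by have -> : t = 0 by lra. 
    by move=> u; rewrite /= in_itv /=; apply: Lf.
  rewrite EFinD [X in (_ <= X)%E]addeC; apply: leeD => //.
  exact: leeD.
- apply/seteqP; split => x //=; rewrite /A /= in_itv /=.
  by move=> [h1 /andP [h2 _]]; have := lt_le_trans h2 h1; rewrite ltxx.
- apply/seteqP; split => x //=; rewrite /A /= in_itv /=.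
  move=> [[h1|/andP [_ h2]] h3].
  + have mt : m <= m + t by rewrite lerDl.
    by have := le_lt_trans (le_trans h1 mt) h3; rewrite ltxx.
  + by have := le_lt_trans h2 h3; rewrite ltxx.
Qed.

Lemma dens_lower d (Omega : measurableType d) (R : realType)
  (P : probability Omega R) (Y : {RV P >-> R}) (f : R -> R) (m L t : R) :
  has_density Y f -> measurable_fun setT f -> is_median_density f m ->
  0 <= L -> 0 <= t -> (forall u : R, m - t <= u < m -> L <= f u) ->
  (P (Y @^-1` [set x | x < m - t]%R) + (2^-1 + L * t)%:E <= 1)%E.
Proof.
move=> hd mf [med1 med2] L0 t0 Lf.
set A := [set x : R | m <= x].
have mA : measurable A.
  have -> : A = `[m, +oo[%classic by apply/seteqP; split => x; rewrite /A /= in_itv /= andbT.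
  exact: measurable_itv.
have mB : measurable (`[m - t, m[%classic : set R) by exact: measurable_itv.
have mC : measurable [set x : R | x < m - t].
  have -> : [set x : R | x < m - t] = `]-oo, m - t[%classic by apply/seteqP; split => x; rewrite /= in_itv /=.
  exact: measurable_itv.
have eT : [set: R] = ([set x | x < m - t] `|` `[m - t, m[) `|` A.
  apply/seteqP; split => x // _; rewrite /A /= !in_itv /=.
  case: (ltP x (m - t)) => xm; first by left; left.
  case: (ltP x m) => xt; first by left; right; apply/andP.
  by right.
have mY : forall S, measurable S -> measurable (Y @^-1` S).
  by move=> S mS; exact: measurable_funPTI.
have := probability_setT P.
rewrite -(preimage_setT Y) eT !preimage_setU.
rewrite measureU; [| by apply: measurableU; apply: mY| by apply: mY|].
rewrite measureU; [| by apply: mY| by apply: mY|].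
- move=> H; rewrite -H.
  have hA : ((2^-1)%:E <= P (Y @^-1` A))%E by rewrite hd.
  have hB : ((L * t)%:E <= P (Y @^-1` `[(m - t)%R, m[))%E.
    rewrite hd //.
    apply: le_trans (@int_lb R f _ L mB mf L0 _).
      rewrite lebesgue_measure_itv /= lte_fin.
      case: ltP => h; first by rewrite -EFinD -EFinM lee_fin; lra.
      by have -> : t = 0 by lra.
    by move=> u; rewrite /= in_itv /=; apply: Lf.
  rewrite -addeA; apply: leeD => //.
  rewrite EFinD addeC; exact: leeD.
- apply/seteqP; split => x //=; rewrite /A /= in_itv /=.
  by move=> [h1 /andP [h2 _]]; have := lt_le_trans h1 h2; rewrite ltxx.
- apply/seteqP; split => x //=; rewrite /A /= in_itv /=.
  move=> [[h1|/andP [_ h2]] h3].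
  + have mt : m - t <= m by rewrite lerBlDr lerDl.
    by have := lt_le_trans (lt_le_trans h1 mt) h3; rewrite ltxx.
  + by have := lt_le_trans h2 h3; rewrite ltxx.
Qed.
Lemma count_enum_card n (P : pred 'I_n) : count P (enum 'I_n) = #|P|.
Proof.
rewrite cardE -size_filter /enum_mem.
by rewrite (@eq_filter _ (mem 'I_n) predT) ?filter_predT.
Qed.

Lemma clip_le (R : realType) (T c u : R) : - T <= c -> c < T -> (clip T u <= c) = (u <= c).
Proof.
move=> h1 h2; rewrite /clip; case: ifP => hu //.
have T0 : 0 < T by lra.
move/negbT: hu; rewrite -ltNge => hu.
case: (ltgtP u 0) => u0.
- rewrite ltr0_sg // mulN1r h1; apply/esym; move: hu; rewrite ltr0_norm // => hu.
  apply/ltW; lra.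
- rewrite gtr0_sg // mul1r; move: hu; rewrite gtr0_norm // => hu.
  apply/idP/idP => h; lra.
- by move: hu; rewrite u0 normr0; lra.
Qed.

Lemma clip_lt (R : realType) (T c u : R) : - T < c -> c <= T -> (clip T u < c) = (u < c).
Proof.
move=> h1 h2; rewrite /clip; case: ifP => hu //.
have T0 : 0 < T by lra.
move/negbT: hu; rewrite -ltNge => hu.
case: (ltgtP u 0) => u0.
- rewrite ltr0_sg // mulN1r h1; apply/esym; move: hu; rewrite ltr0_norm // => hu.
  lra.
- rewrite gtr0_sg // mul1r; move: hu; rewrite gtr0_norm // => hu.
  apply/idP/idP => h; lra.
- by move: hu; rewrite u0 normr0; lra.
Qed.

Lemma med_le (R : realType) n (x : 'I_n -> R) (T c : R) :
  (0 < n./2)%N -> - T <= c -> c < T ->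
  (med_hat_T T x <= c) = (n./2 <= #|[pred i | (x i <= c)%R]|)%N.
Proof.
move=> l0 h1 h2.
rewrite /med_hat_T /med_hat /order_stat.
set s := sort _ _.
have ss : sorted <=%R s by apply: sort_sorted; exact: le_total.
have sz : size s = n by rewrite size_sort size_map -cardE card_ord.
have cnt : count (<= c) s = #|[pred i | (x i <= c)%R]|.
  rewrite count_sort /image_mem count_map -count_enum_card.
  by apply: eq_count => i /=; rewrite clip_le.
have ln : (n./2.-1 < n)%N.
  by have := odd_double_half n; move: l0; rewrite -!muln2; lia.
apply/idP/idP => h.
- rewrite -cnt; case: (leqP (count (<= c) s) n./2.-1) => H.
    have := nth_count_gt 0 ss (x:=c) (i:=n./2.-1).
    rewrite H sz ln /= => /(_ isT) H2.
    by move: (lt_le_trans H2 h); rewrite ltxx.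
  by rewrite -(prednK l0).
- apply: nth_count_le => //; rewrite cnt.
  by rewrite prednK.
Qed.

Lemma med_lt (R : realType) n (x : 'I_n -> R) (T c : R) :
  (0 < n./2)%N -> - T < c -> c <= T ->
  (med_hat_T T x < c) = (n./2 <= #|[pred i | (x i < c)%R]|)%N.
Proof.
move=> l0 h1 h2.
rewrite /med_hat_T /med_hat /order_stat.
set s := sort _ _.
have ss : sorted <=%R s by apply: sort_sorted; exact: le_total.
have sz : size s = n by rewrite size_sort size_map -cardE card_ord.
have cnt : count (< c) s = #|[pred i | (x i < c)%R]|.
  rewrite count_sort /image_mem count_map -count_enum_card.
  by apply: eq_count => i /=; rewrite clip_lt.
have ln : (n./2.-1 < n)%N.
  by have := odd_double_half n; move: l0; rewrite -!muln2; lia.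
apply/idP/idP => h.
- rewrite -cnt; case: (leqP (count (< c) s) n./2.-1) => H.
    have := nth_count_ge 0 ss (x:=c) (i:=n./2.-1).
    rewrite H sz ln /= => /(_ isT) H2.
    by move: (le_lt_trans H2 h); rewrite ltxx.
  by rewrite -(prednK l0).
- apply: nth_count_lt => //; rewrite cnt.
  by rewrite prednK.
Qed.

Theorem lemma3 (d : measure_display) (Omega : measurableType d) (R : realType)
  (P : probability Omega R) (n : nat) (X : 'I_n -> {RV P >-> R})
  (f : R -> R) (m r L RR T alpha3 : R) :
  mutually_independent X ->
  measurable_fun setT f -> (forall u, 0 <= f u) ->
  (forall i, has_density (X i) f) ->
  is_median_density f m ->
  (forall m', is_median_density f m' -> m' = m) ->
  0 < r -> 0 < L ->
  (forall u, m - r <= u <= m + r -> L <= f u) ->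
  0 < RR -> `|m| <= RR -> RR + r < T ->
  2 * expR (- (n%:R * L ^+ 2 * r ^+ 2) / 2) <= alpha3 -> alpha3 <= 1 ->
  let t := Num.sqrt (2 * ln (2 / alpha3) / (n%:R * L ^+ 2)) in
  let E := [set w | `|med_hat_T T (fun i => X i w) - m| <= t] in
  ((1 - alpha3)%:E <= P E)%E.
Proof.
move=> indep mf f0 hd med _ r0 L0 Lr RR0 mR RT ha1 ha2.
cbv zeta.
set t := Num.sqrt _.
set E := [set w | _].
have a0 : 0 < alpha3.
  by apply: lt_le_trans ha1; apply: mulr_gt0 => //; apply: expR_gt0.
have n0 : (0 < n)%N.
  case: (posnP n) => // n0; move: ha1; rewrite n0.
  by rewrite mul0r mul0r oppr0 mul0r expR0 mulr1; lra.
have nR : 0 < n%:R :> R by rewrite ltr0n.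
set K := ln (2 / alpha3).
have two_a : 2 <= 2 / alpha3.
  by rewrite ler_pdivlMr //; have := ler_wpM2l (_ : 0 <= 2) ha2; lra.
have K0 : 0 <= K by apply: ln_ge0; lra.
have L2 : 0 < L ^+ 2 by apply: exprn_gt0.
have Q0 : 0 <= 2 * K / (n%:R * L ^+ 2).
  by apply: divr_ge0; [lra | apply: ltW; apply: mulr_gt0].
have t0 : 0 <= t by apply: sqrtr_ge0.
have t2 : t ^+ 2 = 2 * K / (n%:R * L ^+ 2) by rewrite sqr_sqrtr.
set dd := L * t.
have d0 : 0 <= dd by apply: mulr_ge0 => //; apply: ltW.
have nd : n%:R * dd ^+ 2 = 2 * K.
  by rewrite /dd exprMn t2; field; apply/andP; split; apply: lt0r_neq0.
have ed : expR (- (n%:R * dd ^+ 2) / 2) = alpha3 / 2.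
  rewrite nd; have -> : - (2 * K) / 2 = - K by field.
  rewrite expRN lnK ?invf_div //.
  by rewrite posrE; apply: divr_gt0.
have Kr : K <= n%:R * L ^+ 2 * r ^+ 2 / 2.
  rewrite /K -[X in _ <= X]expRK ler_ln; last 2 first.
  - by rewrite posrE; apply: divr_gt0.
  - by rewrite posrE expR_gt0.
  rewrite ler_pdivrMr // mulrC -ler_pdivrMr ?expR_gt0 //.
  by rewrite -expRN -mulNr.
have tr : t <= r.
  rewrite /t -[X in _ <= X]gtr0_norm // -sqrtr_sqr ler_sqrt; last exact: sqr_ge0.
  rewrite ler_pdivrMr; last by apply: mulr_gt0.
  have e : r ^+ 2 * (n%:R * L ^+ 2) = n%:R * L ^+ 2 * r ^+ 2 by ring.
  rewrite e -/K; lra.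
set c1 := m + t.
set c2 := m - t.
have T0 : 0 < T by move: (normr_ge0 m); lra.
have hm1 : m <= `|m| by apply: ler_norm.
have hm2 : - m <= `|m| by rewrite -normrN; apply: ler_norm.
have hc1a : - T <= c1 by rewrite /c1; lra.
have hc1b : c1 < T by rewrite /c1; lra.
have hc2a : - T < c2 by rewrite /c2; lra.
have hc2b : c2 <= T by rewrite /c2; lra.
pose i0 : 'I_n := Ordinal n0.
pose B1 := [set x : R | c1 < x].
pose B2 := [set x : R | x < c2].
have mB1 : measurable B1.
  have -> : B1 = `]c1, +oo[%classic by apply/seteqP; split => x; rewrite /B1 /= in_itv /= andbT.
  exact: measurable_itv.
have mB2 : measurable B2.
  have -> : B2 = `]-oo, c2[%classic by apply/seteqP; split => x; rewrite /B2 /= in_itv /=.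
  exact: measurable_itv.
have Lf1 : forall u : R, m < u <= m + t -> L <= f u.
  by move=> u /andP [h1 h2]; apply: Lr; apply/andP; split; lra.
have Lf2 : forall u : R, m - t <= u < m -> L <= f u.
  by move=> u /andP [h1 h2]; apply: Lr; apply/andP; split; lra.
have hu := @dens_upper _ _ _ P (X i0) f m L t (hd i0) mf med (ltW L0) t0 Lf1.
have hl := @dens_lower _ _ _ P (X i0) f m L t (hd i0) mf med (ltW L0) t0 Lf2.
have PB1 : forall i, P (X i @^-1` B1) = P (X i0 @^-1` B1) by move=> i; rewrite !hd.
have PB2 : forall i, P (X i @^-1` B2) = P (X i0 @^-1` B2) by move=> i; rewrite !hd.
have mY : forall i S, measurable S -> measurable (X i @^-1` S).
  by move=> i S mS; exact: measurable_funPTI.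
have fin1 : P (X i0 @^-1` B1) \is a fin_num.
  rewrite ge0_fin_numE //; apply: le_lt_trans (probability_le1 _ _) _ => //; first exact: mY.
  exact: ltry.
have fin2 : P (X i0 @^-1` B2) \is a fin_num.
  rewrite ge0_fin_numE //; apply: le_lt_trans (probability_le1 _ _) _ => //; first exact: mY.
  exact: ltry.
set p1 := fine (P (X i0 @^-1` B1)).
set p2 := fine (P (X i0 @^-1` B2)).
have ep1 : P (X i0 @^-1` B1) = p1%:E by rewrite fineK.
have ep2 : P (X i0 @^-1` B2) = p2%:E by rewrite fineK.
have p10 : 0 <= p1 by rewrite -lee_fin -ep1.
have p20 : 0 <= p2 by rewrite -lee_fin -ep2.
have p1d : p1 + (2^-1 + dd) <= 1.
  by move: hu; rewrite -/B1 ep1 -EFinD lee_fin.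
have p2d : p2 + (2^-1 + dd) <= 1.
  by move: hl; rewrite -/B2 ep2 -EFinD lee_fin.
have d1 : dd <= 2^-1 by lra.
have ln2 : 4^-1 <= ln (2 : R).
  rewrite -[X in X <= _]expRK ler_ln ?posrE ?expR_gt0 //.
  have := @expR_le_quad R (4^-1) ltac:(lra) ltac:(lra); lra.
have lnK2 : ln (2 : R) <= K.
  by rewrite /K ler_ln // posrE //; apply: divr_gt0.
have nd2 : 2^-1 <= n%:R * dd ^+ 2 by rewrite nd; lra.
have n2 : (2 <= n)%N.
  have dd2 : dd ^+ 2 <= 4^-1.
    have := ler_wpM2l d0 d1; rewrite -expr2 => h; apply: le_trans h _.
    by have := ler_wpM2r (_ : 0 <= 2^-1) d1; lra.
  have : n%:R * dd ^+ 2 <= n%:R / 4 by apply: ler_wpM2l => //; apply: ltW.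
  move=> h; rewrite -(ler_nat R); lra.
have l0 : (0 < n./2)%N.
  by clear -n2; have := odd_double_half n; move: n2; rewrite -!muln2; lia.
set l := n./2.
have na1 : (n <= (n - l).+1.*2.+1)%N.
  by clear -l; rewrite /l; have := odd_double_half n; rewrite -!muln2; lia.
have na2 : (n <= l.*2.+1)%N.
  by clear -l; rewrite /l; have := odd_double_half n; rewrite -!muln2; lia.
have hB1 : forall i, P (X i @^-1` B1) = p1%:E by move=> i; rewrite PB1.
have hB2 : forall i, P (X i @^-1` B2) = p2%:E by move=> i; rewrite PB2.
have [mA1 PA1] := @prob_tail _ _ _ P n X B1 p1 dd (n - l).+1 indep mB1 hB1 p10
   ltac:(lra) d0 d1 na1 nd2.
have [mA2 PA2] := @prob_tail _ _ _ P n X B2 p2 dd l indep mB2 hB2 p20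
   ltac:(lra) d0 d1 na2 nd2.
rewrite ed in PA1 PA2.
set A1 := [set w | _] in mA1 PA1.
set A2 := [set w | _] in mA2 PA2.
have ln : (l <= n)%N by clear; rewrite /l; have := odd_double_half n; rewrite -!muln2; lia.
have Ew : forall w, E w <-> ~ (A1 w \/ A2 w).
  move=> w; rewrite /E /A1 /A2 /=.
  set M := med_hat_T T _.
  have h1 := @med_le R n (fun i => X i w) T c1 l0 hc1a hc1b.
  have h2 := @med_lt R n (fun i => X i w) T c2 l0 hc2a hc2b.
  rewrite -/M in h1 h2.
  have k1 : (#|[pred i | (X i w <= c1)%R]| + #|[pred i | `[< B1 (X i w) >]]| = n)%N.
    rewrite -[RHS]card_ord -(cardC [pred i | (X i w <= c1)%R]); congr addn.
    by apply: eq_card => i; rewrite !inE asboolb /= ltNge.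
  have k2 : #|[pred i | `[< B2 (X i w) >]]| = #|[pred i | (X i w < c2)%R]|.
    by apply: eq_card => i; rewrite !inE asboolb.
  split.
  - rewrite ler_norml => /andP [e1 e2] [H|H].
    + have : M <= c1 by rewrite /c1; lra.
      by rewrite h1; move: H k1; clear -ln; lia.
    + have : ~~ (M < c2) by rewrite -leNgt /c2; lra.
      by rewrite h2 -k2 H.
  - move=> H; rewrite ler_norml.
    have nA1 : ~~ ((n - l).+1 <= #|[pred i | `[< B1 (X i w) >]]|)%N by apply/negP => H1; apply: H; left.
    have nA2 : ~~ (l <= #|[pred i | `[< B2 (X i w) >]]|)%N by apply/negP => H1; apply: H; right.
    have e1 : M <= c1 by rewrite h1; move: nA1 k1; clear -ln; lia.
    have e2 : ~~ (M < c2) by rewrite h2 -k2.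
    rewrite -leNgt in e2; apply/andP; split; rewrite /c1 /c2 in e1 e2; lra.
have EA : E = ~` (A1 `|` A2).
  by apply/seteqP; split => w /Ew.
rewrite EA probability_setC; last exact: measurableU.
have hU := measureU2 P mA1 mA2.
have U0 : (0 <= P (A1 `|` A2))%E by [].
have finU : P (A1 `|` A2) \is a fin_num.
  rewrite ge0_fin_numE //; apply: le_lt_trans (probability_le1 _ _) _ => //.
    exact: measurableU.
  exact: ltry.
rewrite -(fineK finU) -EFinB lee_fin.
have : (P (A1 `|` A2) <= (alpha3 / 2 + alpha3 / 2)%:E)%E.
  by apply: le_trans hU _; rewrite EFinD; apply: leeD.
rewrite -(fineK finU) lee_fin; lra.
Qed.
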